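(* Let $\mathcal{X}$ be a finite set, $\phi\notin\mathcal{X}$, $L,T\in\mathbb{N}$, positions $i_0,\dots,i_{T-1}\in\{0,\dots,L-1\}$ fixed, and $\Pi_t$ ($t=0,\dots,T-1$) probability distributions on $\mathcal{X}\cup\{\phi\}$. Let $X_0\sim P^*$ on $\mathcal{X}^L$, let $Z_0,\dots,Z_{T-1}$ be independent, independent of $X_0$, with $Z_t\sim\Pi_t$, and define the forward process by $X_{t+1,j}=X_{t,j}$ for $j\ne i_t$, $X_{t+1,i_t}=X_{t,i_t}$ if $Z_t=\phi$, and $X_{t+1,i_t}=Z_t$ if $Z_t\in\mathcal{X}$. Then for any $t\in\{0,\dots,T-1\}$, any $x\in\mathcal{X}^L$ and any $a\in\mathcal{X}$ (for which the quantities below are well defined, i.e. $\mathbb{P}(Z_t=\phi)>0$ and the conditioning events and the denominator are nonzero), $$\mathbb{P}\big(X_{t,i_t}=a\mid X_{t+1,-i_t}=x_{-i_t}\big)=\frac{\mathbb{P}(Z_t=a)}{\mathbb{P}(Z_t=\phi)}\left(\frac{1}{\mathbb{P}\big(Z_t=a\mid X_{t+1,-i_t}=x_{-i_t},\,X_{t+1,i_t}=a\big)}-1\right).$$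
   Context: For $x\in\mathcal{X}^L$ and $i\in\{0,\dots,L-1\}$, $x_i$ is the $i$-th coordinate and $x_{-i}\in\mathcal{X}^{L-1}$ is the sequence obtained by deleting the $i$-th coordinate. *)

(* Defs.v *)
From mathcomp Require Import all_boot all_order all_algebra.
Set Implicit Arguments. Unset Strict Implicit. Unset Printing Implicit Defensive.
Import Order.TTheory GRing.Theory Num.Theory.
Local Open Scope ring_scope.

Section Forward.
Variables (R : realFieldType) (X : finType) (L T : nat).
(* The extra symbol phi is modelled as [None] in [option X]. *)
Variable pos : 'I_T -> 'I_L.
Variable Pstar : {ffun 'I_L -> X} -> R.
Variable Pi : 'I_T -> option X -> R.

(* Sample space: (X_0, (Z_0,...,Z_{T-1})), with product weight, i.e.
   X_0 ~ P*, Z_t ~ Pi_t, all mutually independent. *)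
Definition Omega := ({ffun 'I_L -> X} * {ffun 'I_T -> option X})%type.

Definition weight (w : Omega) : R := Pstar w.1 * \prod_(t < T) Pi t (w.2 t).

Definition Pr (E : pred Omega) : R := \sum_(w : Omega | E w) weight w.

Definition cond_Pr (A B : pred Omega) : R :=
  Pr (fun w => A w && B w) / Pr B.

Definition step (t : 'I_T) (x : {ffun 'I_L -> X}) (z : option X)
  : {ffun 'I_L -> X} :=
  [ffun j => if j == pos t then
               (match z with Some a => a | None => x j end)
             else x j].

(* X_k as a function of the outcome, for k <= T. *)
Fixpoint state (k : nat) (w : Omega) : {ffun 'I_L -> X} :=
  match k with
  | 0 => w.1
  | k'.+1 =>
      match insub k' : option 'I_T with
      | Some t => step t (state k' w) (w.2 t)
      | None => state k' w
      end
  end.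

End Forward.

(* x_{-i}: the sequence obtained by deleting the i-th coordinate. *)
Definition del (X : Type) (L : nat) (i : 'I_L) (x : {ffun 'I_L -> X}) : seq X :=
  [seq x j | j <- enum 'I_L & j != i].

(* Main.v *)
Require Import Defs.
From mathcomp Require Import all_boot all_order all_algebra.
From mathcomp.algebra_tactics Require Import ring.
Import Order.TTheory GRing.Theory Num.Theory.
Local Open Scope ring_scope.

Section Aux.
Variables (R : realFieldType) (X : finType) (L T : nat).
Variable pos : 'I_T -> 'I_L.
Variable Pstar : {ffun 'I_L -> X} -> R.
Variable Pi : 'I_T -> option X -> R.
Variable t : 'I_T.

Definition upd (z : option X) (w : Omega X L T) : Omega X L T :=
  (w.1, [ffun j => if j == t then z else w.2 j]).

Lemma upd2 z z' (w : Omega X L T) : (upd z' (upd z w)) = upd z' w.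
Proof. rewrite /upd /=; congr pair; apply/ffunP => j; rewrite !ffunE; case: (j == t) => //. Qed.

Lemma upd_id (w : Omega X L T) : upd (w.2 t) w = w.
Proof. case: w => w1 w2; rewrite /upd /=; congr pair; apply/ffunP => j; rewrite !ffunE; by case: eqP => [->|]. Qed.

Lemma upd_t z (w : Omega X L T) : (upd z w).2 t = z.
Proof. by rewrite ffunE eqxx. Qed.

Lemma state_upd k (w : Omega X L T) z : (k <= t)%N -> state pos k (upd z w) = state pos k w.
Proof.
elim: k => [|k IH] Hk //=.
case: insubP => [t' _ Ht'|_]; rewrite IH ?(ltnW Hk) //.
rewrite ffunE; case: eqP => // e; subst t'; by rewrite Ht' ltnn in Hk.
Qed.

Lemma state_succ (w : Omega X L T) : state pos t.+1 w = step pos t (state pos t w) (w.2 t).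
Proof. by rewrite /= valK. Qed.

Lemma sum_split (F : Omega X L T -> R) :
  \sum_(w : Omega X L T) F w = \sum_(w : Omega X L T | w.2 t == None) \sum_z F (upd z w).
Proof.
rewrite (partition_big (fun w : Omega X L T => w.2 t) predT) //=.
rewrite [RHS]exchange_big /=; apply: eq_bigr => z _.
rewrite (reindex_onto (upd z) (upd None)) /=; last first.
  by move=> w /eqP <-; rewrite upd2 upd_id.
apply: eq_bigl => w; rewrite upd_t eqxx /= upd2.
apply/eqP/eqP => [<-|H]; first by rewrite upd_t.
by rewrite -H upd_id.
Qed.

Definition hw (w : Omega X L T) := Pstar w.1 * \prod_(j | j != t) Pi j (w.2 j).

Lemma weight_upd z (w : Omega X L T) : weight Pstar Pi (upd z w) = Pi t z * hw w.
Proof.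
rewrite /weight /hw (bigD1 t) //= ffunE eqxx mulrCA; congr (_ * (_ * _)).
by apply: eq_bigr => j /negbTE ne; rewrite ffunE ne.
Qed.

Hypothesis Pi_sum1 : \sum_z Pi t z = 1.

Lemma keyK (G : {ffun 'I_L -> X} -> option X -> bool) :
  Pr Pstar Pi (fun w => G (state pos t w) (w.2 t)) =
  \sum_z Pi t z * Pr Pstar Pi (fun w => G (state pos t w) z).
Proof.
rewrite /Pr big_mkcond sum_split.
under [RHS]eq_bigr => z _ do rewrite big_mkcond sum_split.
under [RHS]eq_bigr => z _ do rewrite big_distrr.
rewrite [RHS]exchange_big /=; apply: eq_bigr => w _; apply: eq_bigr => z _ /=.
rewrite upd_t state_upd //.
under [in RHS]eq_bigr => z0 _ do rewrite state_upd //.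
case: (G _ z); last by rewrite big1 ?mulr0.
under eq_bigr => z0 _ do rewrite weight_upd.
by rewrite weight_upd -big_distrl /= Pi_sum1 mul1r.
Qed.
Lemma Pr_eq {E E2 : pred (Omega X L T)} : E =1 E2 -> Pr Pstar Pi E = Pr Pstar Pi E2.
Proof. by move=> h; apply: eq_bigl. Qed.

Lemma Pr0 : Pr Pstar Pi (fun _ => false) = 0.
Proof. by rewrite /Pr big_pred0. Qed.

Lemma Pr_ge0 (Pstar_ge0 : forall x, 0 <= Pstar x) (Pi_ge0 : forall t z, 0 <= Pi t z) E :
  0 <= Pr Pstar Pi E.
Proof.
apply: sumr_ge0 => w _; apply: mulr_ge0 => //; exact: prodr_ge0.
Qed.

Lemma del_step (y : {ffun 'I_L -> X}) (z : option X) : del (pos t) (step pos t y z) = del (pos t) y.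
Proof.
rewrite /del; apply/eq_in_map => j; rewrite mem_filter => /andP [ne _].
by rewrite ffunE (negbTE ne).
Qed.

Lemma step_at (y : {ffun 'I_L -> X}) (z : option X) : step pos t y z (pos t) = match z with Some b => b | None => y (pos t) end.
Proof. by rewrite ffunE eqxx. Qed.

End Aux.

Theorem lemma3 (R : realFieldType) (X : finType) (L T : nat)
  (pos : 'I_T -> 'I_L)
  (Pstar : {ffun 'I_L -> X} -> R) (Pi : 'I_T -> option X -> R)
  (Pstar_ge0 : forall x, 0 <= Pstar x)
  (Pstar_sum1 : \sum_x Pstar x = 1)
  (Pi_ge0 : forall t z, 0 <= Pi t z)
  (Pi_sum1 : forall t, \sum_z Pi t z = 1)
  (t : 'I_T) (x : {ffun 'I_L -> X}) (a : X) :
  let P := Pr Pstar Pi in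
  let CP := cond_Pr Pstar Pi in
  let Xt := fun k (w : Omega X L T) => state pos k w in
  let Zt := fun (w : Omega X L T) => w.2 t in
  let B := fun w => del (pos t) (Xt t.+1 w) == del (pos t) x in
  let Ca := fun w => B w && (Xt t.+1 w (pos t) == a) in
  0 < P (fun w => Zt w == None) ->
  0 < P B ->
  0 < P Ca ->
  CP (fun w => Zt w == Some a) Ca != 0 ->
  CP (fun w => Xt t w (pos t) == a) B =
    P (fun w => Zt w == Some a) / P (fun w => Zt w == None) *
    ((CP (fun w => Zt w == Some a) Ca)^-1 - 1).
Proof.
move=> P CP Xt Zt B Ca.
rewrite /CP /cond_Pr /P.
pose Y := @state X L T pos t.
pose D := fun y : {ffun 'I_L -> X} => del (pos t) y == del (pos t) x.
pose m := fun (y : {ffun 'I_L -> X}) (z : option X) =>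
  match z with Some b => b == a | None => y (pos t) == a end.
pose c := Pr Pstar Pi (fun _ => true).
pose PD := Pr Pstar Pi (fun w => D (Y w)).
pose PE := Pr Pstar Pi (fun w => D (Y w) && (Y w (pos t) == a)).
have hN : Pr Pstar Pi (fun w => Zt w == None) = Pi t None * c.
  rewrite (@keyK R X L T pos Pstar Pi t (Pi_sum1 t) (fun _ z => z == None)).
  rewrite (bigD1 None) //= big1 ?addr0 => [|z /negbTE hz].
    by congr (_ * _); apply: Pr_eq.
  by rewrite (@Pr_eq R X L T Pstar Pi _ (fun _ => false)) ?Pr0 ?mulr0 // => w /=; rewrite hz.
have hA : Pr Pstar Pi (fun w => Zt w == Some a) = Pi t (Some a) * c.
  rewrite (@keyK R X L T pos Pstar Pi t (Pi_sum1 t) (fun _ z => z == Some a)).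
  rewrite (bigD1 (Some a)) //= big1 ?addr0 => [|z /negbTE hz].
    by congr (_ * _); apply: Pr_eq => w; rewrite eqxx.
  by rewrite (@Pr_eq R X L T Pstar Pi _ (fun _ => false)) ?Pr0 ?mulr0 // => w /=; rewrite hz.
have hB : Pr Pstar Pi B = PD.
  by apply: Pr_eq => w; rewrite /B /Xt state_succ del_step.
have hE : Pr Pstar Pi (fun w => (Xt t w (pos t) == a) && B w) = PE.
  by apply: Pr_eq => w; rewrite /B /Xt state_succ del_step andbC.
have hC : Pr Pstar Pi Ca = Pi t None * PE + Pi t (Some a) * PD.
  rewrite (@Pr_eq R X L T Pstar Pi _ (fun w => D (Y w) && m (Y w) (w.2 t))); last first.
    move=> w; rewrite /Ca /B /Xt state_succ del_step step_at.
    by case: (w.2 t).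
  rewrite (@keyK R X L T pos Pstar Pi t (Pi_sum1 t) (fun y z => D y && m y z)).
  rewrite (bigD1 None) //= (bigD1 (Some a)) //= big1 ?addr0 => [|z /andP [hz1 hz2]].
    congr (_ * _ + _ * _); apply: Pr_eq => w //=.
    by rewrite eqxx andbT.
  rewrite (@Pr_eq R X L T Pstar Pi _ (fun _ => false)) ?Pr0 ?mulr0 // => w.
  case: z hz1 hz2 => [b|] //= _ hb; apply/negbTE.
  rewrite andbC; apply/nandP; left; apply/eqP => e; by rewrite e eqxx in hb.
have hAC : Pr Pstar Pi (fun w => (Zt w == Some a) && Ca w) = Pi t (Some a) * PD.
  rewrite (@Pr_eq R X L T Pstar Pi _ (fun w => (w.2 t == Some a) && (D (Y w) && m (Y w) (w.2 t)))); last first.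
    move=> w; rewrite /Ca /B /Xt /Zt state_succ del_step step_at.
    by case: (w.2 t).
  rewrite (@keyK R X L T pos Pstar Pi t (Pi_sum1 t) (fun y z => (z == Some a) && (D y && m y z))).
  rewrite (bigD1 (Some a)) //= big1 ?addr0 => [|z /negbTE hz].
    by congr (_ * _); apply: Pr_eq => w /=; rewrite eqxx /= eqxx andbT.
  by rewrite (@Pr_eq R X L T Pstar Pi _ (fun _ => false)) ?Pr0 ?mulr0 // => w; rewrite hz.
rewrite hN hA hB hE hC hAC => hN0 hD0 hC0 hq.
have [pA0 PD0] : Pi t (Some a) != 0 /\ PD != 0.
  by move: hq; rewrite !mulf_eq0 negb_or => /andP [/norP [] ].
have c0 : c != 0 by move: hN0; rewrite lt0r mulf_eq0 negb_or => /andP [/andP [_ ->]].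
have pN0 : Pi t None != 0 by move: hN0; rewrite lt0r mulf_eq0 negb_or => /andP [/andP [-> _]].
have C0 : Pi t None * PE + Pi t (Some a) * PD != 0 by rewrite lt0r in hC0; case/andP: hC0.
field; rewrite ?pA0 ?PD0 ?c0 ?pN0 ?C0 //.
Qed.
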